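(* For every $r$-configuration $F$ of $U$ and $V$, $\phi(\Phi(F))=F$. In particular, $\Phi$ is injective on $r$-configurations.
   Context: $n,r\ge1$, $m=rn$. $U=\{u_1\prec\cdots\prec u_n\}$, $V=\{v_1\prec\cdots\prec v_n\}$; $\overline U=U\times[r]$, $\overline V=V\times[r]$ ordered lexicographically (write $u^s$ for $(u,s)$). An $r$-configuration is a bijection between $\overline U$ and $\overline V$; a quasi configuration is a partial matching. Pairs $(\bar u,\bar v),(\bar u',\bar v')$ are noncrossing if ($\bar u\prec\bar u'$ and $\bar v\prec\bar v'$) or ($\bar u'\prec\bar u$ and $\bar v'\prec\bar v$). For an $r$-configuration $F$: $a_{\bar u}$ is the maximum size of a set of pairwise noncrossing pairs of $F$ containing the pair $(\bar u,\bar v')\in F$ at $\bar u$, all of whose pairs $(x,y)$ satisfy $x\preceq\bar u$, $y\preceq\bar v'$; $b_{\bar v}$ is defined symmetrically; $\Phi(F)=a_{u_1^1}\cdots a_{u_n^r}|b_{v_1^1}\cdots b_{v_n^r}$, the walk with steps $e_{a_{\bar u}}$ ($\bar u$ increasing) then $-e_{b_{\bar v}}$ ($\bar v$ increasing). For a walk $w=a_{u_1^1}\cdots a_{u_n^r}|b_{v_1^1}\cdots b_{v_n^r}$, $A_k(w)=\{\bar u:a_{\bar u}=k\}$, $B_k(w)=\{\bar v:b_{\bar v}=k\}$; connecting equal-size ordered sets $A,B$ in a crossing way means pairing the $i$-th smallest of $A$ with the $i$-th largest of $B$; $\phi(w)$ is the quasi configuration obtained by, for each $k$: if $|A_k(w)|\ge|B_k(w)|$,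 connecting the $|B_k(w)|$ smallest elements of $A_k(w)$ with $B_k(w)$ in a crossing way, otherwise connecting $A_k(w)$ with the $|A_k(w)|$ largest elements of $B_k(w)$ in a crossing way. *)

(* Defs.v *)
From mathcomp Require Import all_boot.
Set Implicit Arguments. Unset Strict Implicit. Unset Printing Implicit Defensive.

(* U = {u_1 < ... < u_n} is modelled by 'I_n (u_i = i-1), likewise V;
   Ubar = U x [r] and Vbar = V x [r] are modelled by 'I_n * 'I_r with the
   lexicographic order; (u, s) stands for u^s. *)
Definition bar (n r : nat) : finType := ('I_n * 'I_r)%type.

Definition lexlt n r (x y : bar n r) : bool :=
  (x.1 < y.1)%N || ((x.1 == y.1) && (x.2 < y.2)%N).
Definition lexle n r (x y : bar n r) : bool := (x == y) || lexlt x y.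

Definition pair_t n r : finType := (bar n r * bar n r)%type.

Definition noncrossing n r (p q : pair_t n r) : bool :=
  (lexlt p.1 q.1 && lexlt p.2 q.2) || (lexlt q.1 p.1 && lexlt q.2 p.2).

(* An r-configuration is a bijection F : Ubar -> Vbar; its set of pairs. *)
Definition graph n r (F : bar n r -> bar n r) : {set pair_t n r} :=
  [set p | F p.1 == p.2].

Definition admissible n r (F : bar n r -> bar n r) (p0 : pair_t n r)
    (S : {set pair_t n r}) : bool :=
  [&& S \subset graph F, p0 \in S,
      [forall p in S, forall q in S, (p != q) ==> noncrossing p q] &
      [forall p in S, lexle p.1 p0.1 && lexle p.2 p0.2]].

Definition acoef n r (F : bar n r -> bar n r) (u : bar n r) : nat :=
  \max_(S : {set pair_t n r} | admissible F (u, F u) S) #|S|.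

Definition bcoef n r (F : bar n r -> bar n r) (v : bar n r) : nat :=
  \max_(S : {set pair_t n r} |
          [exists u, (F u == v) && admissible F (u, v) S]) #|S|.

(* A walk a_{u_1^1} ... a_{u_n^r} | b_{v_1^1} ... b_{v_n^r}, stored as the
   pair of its labels indexed by Ubar and Vbar (in increasing order). *)
Definition walk n r : Type := ({ffun bar n r -> nat} * {ffun bar n r -> nat})%type.

Definition Phi n r (F : bar n r -> bar n r) : walk n r :=
  ([ffun u => acoef F u], [ffun v => bcoef F v]).

Definition Ak n r (w : walk n r) (k : nat) : {set bar n r} := [set u | w.1 u == k].
Definition Bk n r (w : walk n r) (k : nat) : {set bar n r} := [set v | w.2 v == k].

(* x is the i-th smallest element of A (0-based) iff rank_lo A x = i;
   y is the i-th largest element of B (0-based) iff rank_hi B y = i. *)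
Definition rank_lo n r (A : {set bar n r}) (x : bar n r) : nat :=
  #|[set y in A | lexlt y x]|.
Definition rank_hi n r (B : {set bar n r}) (y : bar n r) : nat :=
  #|[set z in B | lexlt y z]|.

Definition conn_k n r (w : walk n r) (k : nat) (p : pair_t n r) : bool :=
  let A := Ak w k in let B := Bk w k in
  [&& p.1 \in A, p.2 \in B &
    if (#|B| <= #|A|)%N then
      (* |B| smallest elements of A connected with B in a crossing way *)
      (rank_lo A p.1 < #|B|)%N && (rank_lo A p.1 == rank_hi B p.2)
    else
      (* A connected with the |A| largest elements of B in a crossing way *)
      (rank_hi B p.2 < #|A|)%N && (rank_lo A p.1 == rank_hi B p.2)].

(* phi(w): union over k of the pairs created for k.  For k larger than every
   a-label, A_k is empty and no pair is created, so the union may be taken over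
   k <= max_u a_u. *)
Definition phi n r (w : walk n r) : {set pair_t n r} :=
  \bigcup_(k < (\max_(u : bar n r) w.1 u).+1) [set p | conn_k w k p].

(* Main.v *)
Require Import Defs.
From mathcomp Require Import all_boot zify.
Set Implicit Arguments. Unset Strict Implicit.
Section Lex.
Variables n r : nat.
Implicit Types x y z : bar n r.
Lemma lexltE x y : lexlt x y = (x.1 < y.1)%N || ((x.1 == y.1 :> nat) && (x.2 < y.2)%N).
Proof. by []. Qed.
Lemma lexlt_irr x : lexlt x x = false.
Proof. rewrite lexltE; lia. Qed.
Lemma lexlt_trans x y z : lexlt x y -> lexlt y z -> lexlt x z.
Proof. rewrite !lexltE; lia. Qed.
Lemma lexlt_asym x y : lexlt x y -> lexlt y x = false.
Proof. rewrite !lexltE; lia. Qed.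
Lemma lexle_lt_trans x y z : lexle x y -> lexlt y z -> lexlt x z.
Proof. by rewrite /lexle => /orP[/eqP->|]//; apply: lexlt_trans. Qed.
Lemma lexlt_total x y : x != y -> lexlt x y || lexlt y x.
Proof.
move: x y => [a b] [c d] /=; rewrite !lexltE /= => H.
have : (a != c :> nat) || (b != d :> nat).
  apply: contraR H; rewrite negb_or !negbK => /andP[/eqP e1 /eqP e2].
  by apply/eqP; congr pair; apply: val_inj.
lia.
Qed.
End Lex.
Section Coef.
Variables n r : nat.
Variable F : bar n r -> bar n r.

Lemma adm1 u : admissible F (u, F u) [set (u, F u)].
Proof.
apply/and4P; split.
- by apply/subsetP => p; rewrite !inE => /eqP->; rewrite /=.
- exact: set11.
- by apply/forall_inP => p; rewrite inE => /eqP->; apply/forall_inP => q; rewrite inE => /eqP->; rewrite eqxx.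
- by apply/forall_inP => p; rewrite inE => /eqP-> /=; rewrite /lexle !eqxx.
Qed.

Lemma acoef_att u : exists2 S, admissible F (u, F u) S & acoef F u = #|S|.
Proof.
rewrite /acoef.
have h : 0 < #|(fun S => admissible F (u, F u) S)|.
  by apply/card_gt0P; exists [set (u, F u)]; exact: adm1.
have [S HS ->] := @eq_bigmax_cond _ (fun S => admissible F (u, F u) S) (fun S => #|S|) h.
by exists S.
Qed.

Lemma acoef_ge u S : admissible F (u, F u) S -> #|S| <= acoef F u.
Proof. by move=> H; rewrite /acoef (bigD1 S H) /= leq_maxl. Qed.

Lemma acoef_mono u u' : lexlt u u' -> lexlt (F u) (F u') -> acoef F u < acoef F u'.
Proof.
move=> H1 H2.
have [S /and4P[HSg _ HSnc HSb] ->] := acoef_att u.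
have Hb : forall p, p \in S -> lexlt p.1 u' && lexlt p.2 (F u').
  move=> p /(forall_inP HSb) /andP[a b] /=.
  by rewrite (lexle_lt_trans a H1) (lexle_lt_trans b H2).
have Hn : (u', F u') \notin S.
  by apply/negP => /Hb /andP[]; rewrite lexlt_irr.
apply: leq_trans (acoef_ge (S := (u', F u') |: S) _).
  by rewrite cardsU1 Hn add1n.
rewrite /admissible; apply/and4P; split.
- rewrite subUset HSg andbT sub1set inE; exact: eqxx.
- exact: setU11.
- apply/forall_inP => p; rewrite in_setU1 => /orP[/eqP->|pS];
  apply/forall_inP => q; rewrite in_setU1 => /orP[/eqP->|qS].
  + by rewrite eqxx.
  + by apply/implyP=> _; rewrite /noncrossing; move/Hb: qS => ->; rewrite orbT.
  + by apply/implyP=> _; rewrite /noncrossing; move/Hb: pS => ->.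
  + exact: (forall_inP (forall_inP HSnc p pS) q qS).
- apply/forall_inP => p; rewrite in_setU1 => /orP[/eqP->|pS]; first by rewrite /lexle !eqxx.
  by move/Hb: pS => /andP[a b] /=; rewrite /lexle a b !orbT.
Qed.
End Coef.
Section Main.
Variables n r : nat.
Variables (F g : bar n r -> bar n r).
Hypotheses (HFg : cancel F g) (HgF : cancel g F).
Let Finj : injective F := can_inj HFg.

Lemma bcoefE v : bcoef F v = acoef F (g v).
Proof.
rewrite /bcoef /acoef; apply: eq_bigl => S; apply/existsP/idP.
  by case=> u /andP[/eqP <- H]; rewrite HFg.
by move=> H; exists (g v); rewrite HgF eqxx /=; rewrite HgF in H.
Qed.

Notation A k := (Ak (Phi F) k).
Notation B k := (Bk (Phi F) k).

Lemma inA k u : (u \in A k) = (acoef F u == k).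
Proof. by rewrite inE ffunE. Qed.

Lemma BkE k : B k = F @: A k.
Proof.
apply/setP => v; rewrite inE ffunE bcoefE -inA.
apply/idP/imsetP => [H|[u H ->]]; first by exists (g v); rewrite ?HgF.
by rewrite HFg.
Qed.

Lemma cardB k : #|B k| = #|A k|.
Proof. by rewrite BkE card_imset. Qed.

Lemma keyA k u u' : u \in A k -> u' \in A k -> lexlt (F u) (F u') = lexlt u' u.
Proof.
rewrite !inA => /eqP Hu /eqP Hu'.
have [->|ne] := eqVneq u u'; first by rewrite !lexlt_irr.
have neF : F u != F u' by apply: contra ne => /eqP/Finj ->.
case/orP: (lexlt_total ne) => lt.
  rewrite (lexlt_asym lt); apply/negbTE/negP => ltF.
  by have := acoef_mono lt ltF; rewrite Hu Hu' ltnn.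
rewrite lt; case/orP: (lexlt_total neF) => // ltF.
by have := acoef_mono lt ltF; rewrite Hu Hu' ltnn.
Qed.

Lemma rank_hiE k u : u \in A k -> rank_hi (B k) (F u) = rank_lo (A k) u.
Proof.
move=> Hu; rewrite /rank_hi /rank_lo BkE.
rewrite -(card_imset [set y in A k | lexlt y u] Finj); apply: eq_card => z; rewrite -[z]HgF inE mem_imset // mem_imset // inE.
case Hz: (g z \in A k) => //=.
by rewrite (keyA Hu Hz).
Qed.

Lemma rank_lo_lt k u : u \in A k -> rank_lo (A k) u < #|A k|.
Proof.
move=> Hu; apply: proper_card; apply/properP; split.
  by apply/subsetP => z; rewrite inE => /andP[].
by exists u => //; rewrite inE lexlt_irr andbF.
Qed.

Lemma rank_lo_inj k u u' : u \in A k -> u' \in A k ->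
  rank_lo (A k) u = rank_lo (A k) u' -> u = u'.
Proof.
have H : forall x y, x \in A k -> y \in A k -> lexlt x y -> rank_lo (A k) x < rank_lo (A k) y.
  move=> x y Hx Hy lt; apply: proper_card; apply/properP; split.
    apply/subsetP => z; rewrite !inE => /andP[-> /= l]; exact: lexlt_trans l lt.
  by exists x; rewrite inE ?Hx ?lt // lexlt_irr andbF.
move=> Hu Hu' e; apply/eqP; apply: contraTT isT => ne.
case/orP: (lexlt_total ne) => lt.
  by have := H _ _ Hu Hu' lt; rewrite e ltnn.
by have := H _ _ Hu' Hu lt; rewrite e ltnn.
Qed.

Lemma phiPhi : phi (Phi F) = graph F.
Proof.
apply/setP => -[x y]; rewrite [RHS]inE /=.
apply/bigcupP/eqP => [[k _]|<-].
  rewrite inE /conn_k /= cardB leqnn /= => /and3P[Hx Hy /andP[_ /eqP e]].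
  have [u Hu Ey] : exists2 u, u \in A k & y = F u by apply/imsetP; rewrite -BkE.
  subst y; by rewrite rank_hiE // in e; rewrite (rank_lo_inj Hx Hu e).
have Hk : acoef F x < (\max_(u : bar n r) (Phi F).1 u).+1.
  rewrite ltnS; apply: leq_trans (leq_bigmax x); by rewrite /= ffunE.
exists (Ordinal Hk) => //.
have Hx : x \in A (acoef F x) by rewrite inA.
rewrite inE /conn_k /= cardB leqnn /= Hx rank_hiE // eqxx andbT BkE mem_imset //=.
by rewrite Hx rank_lo_lt.
Qed.
End Main.

Theorem lemma5 (n r : nat) (n_gt0 : (0 < n)%N) (r_gt0 : (0 < r)%N) :
  (forall F : bar n r -> bar n r, bijective F -> phi (Phi F) = graph F) /\
  (forall F G : bar n r -> bar n r, bijective F -> bijective G ->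
     Phi F = Phi G -> F =1 G).
Proof.
have P : forall F : bar n r -> bar n r, bijective F -> phi (Phi F) = graph F.
  by move=> F [g HFg HgF]; exact: phiPhi HFg HgF.
split=> // F G bF bG e x.
have : (x, F x) \in graph G by rewrite -(P G bG) -e (P F bF) inE.
by rewrite inE => /eqP.
Qed.
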